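(* Let $X,Y,Z$ be random variables on finite alphabets $\mathcal{X},\mathcal{Y},\mathcal{Z}$. For each $y\in\mathcal{Y}$ with $\Pr(Y=y)>0$, let $(A_y,B_y,C_y)$ be the random triple on $\mathcal{X}\times\mathcal{Y}\times\mathcal{Z}$ with $$\Pr(A_y=x,B_y=y',C_y=z)=\begin{cases}0 & \text{if } \Pr(Z=z)=0,\\ \dfrac{\Pr(X=x,Y=y',Z=z)\,\Pr(Z=z\mid Y=y)}{\Pr(Z=z)} & \text{otherwise.}\end{cases}$$ Then $\sum_{y:\Pr(Y=y)>0}\Pr(Y=y)\,H(A_y)\le H(X)$.
   Context: $H$ denotes Shannon entropy. *)

(* Defs.v *)
From mathcomp Require Import all_boot all_order all_algebra.
From mathcomp Require Import all_classical all_reals.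
From mathcomp Require Import exp.
Set Implicit Arguments. Unset Strict Implicit. Unset Printing Implicit Defensive.
Import Order.TTheory GRing.Theory Num.Theory.
Local Open Scope ring_scope.

Section Defs.
Variable R : realType.

Definition is_pmf3 (TX TY TZ : finType) (p : TX -> TY -> TZ -> R) : Prop :=
  (forall x y z, 0 <= p x y z) /\ \sum_x \sum_y \sum_z p x y z = 1.

Definition entropy (T : finType) (q : T -> R) : R :=
  - \sum_(t : T) (if q t == 0 then 0 else q t * ln (q t)).

Variables (TX TY TZ : finType) (p : TX -> TY -> TZ -> R).

Definition pX (x : TX) : R := \sum_y \sum_z p x y z.
Definition pY (y : TY) : R := \sum_x \sum_z p x y z.
Definition pZ (z : TZ) : R := \sum_x \sum_y p x y z.
Definition pYZ (y : TY) (z : TZ) : R := \sum_x p x y z.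

(* Pr(Z = z | Y = y), used only when Pr(Y = y) > 0. *)
Definition condZY (y : TY) (z : TZ) : R := pYZ y z / pY y.

Definition pABC (y : TY) (x : TX) (y' : TY) (z : TZ) : R :=
  if pZ z == 0 then 0 else p x y' z * condZY y z / pZ z.

Definition pA (y : TY) (x : TX) : R := \sum_y' \sum_z pABC y x y' z.

End Defs.

(* Main.v *)
Require Import Defs.
From mathcomp Require Import all_boot all_order all_algebra.
From mathcomp Require Import all_classical all_reals.
From mathcomp Require Import exp.
From mathcomp Require Import ring lra.
Set Implicit Arguments. Unset Strict Implicit.
Import Order.TTheory GRing.Theory Num.Theory.
Local Open Scope ring_scope.

Section H1.
Variable R : realType.
Definition phi (t : R) : R := if t == 0 then 0 else t * ln t.

Lemma ln_le_sub1 (u : R) : 0 < u -> ln u <= u - 1.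
Proof.
move=> u0; have := @le_ln1Dx R (u - 1).
rewrite addrCA subrr addr0; apply; lra.
Qed.

Lemma phi_tangent (a t : R) : 0 < a -> 0 <= t ->
  phi a + (1 + ln a) * (t - a) <= phi t.
Proof.
move=> a0 t0; rewrite /phi (gt_eqF a0).
have [->|tn0] := eqVneq t 0; first by rewrite ?eqxx /=; lra.
idtac.
have tp : 0 < t by rewrite lt_def tn0.
have := ln_le_sub1 (divr_gt0 a0 tp).
rewrite ln_div ?posrE // => h.
have h2 : t * (ln a - ln t) <= t * (a / t - 1) by rewrite ler_pM2l.
rewrite mulrBr mulrBr mulr1 mulrCA divff ?mulr1 // in h2.
lra.
Qed.
End H1.
Section H2.
Variable R : realType.

Lemma phi_jensen (I : finType) (P : pred I) (w t : I -> R) :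
  (forall i, P i -> 0 < w i) -> (forall i, P i -> 0 <= t i) ->
  \sum_(i | P i) w i = 1 ->
  phi (\sum_(i | P i) w i * t i) <= \sum_(i | P i) w i * phi (t i).
Proof.
move=> wp tp w1.
set a := \sum_(i | P i) w i * t i.
have a0 : 0 <= a by apply: sumr_ge0 => i Pi; apply: mulr_ge0; [apply: ltW; apply: wp | apply: tp].
have [az|ap] := eqVneq a 0.
  move: (az) => /eqP; rewrite {1}/a psumr_eq0; last first.
    by move=> i Pi; apply: mulr_ge0; [apply: ltW; apply: wp | apply: tp].
  move=> /allP H.
  rewrite az /phi ?eqxx /= big1 // => i Pi.
  have := H i (mem_index_enum i); rewrite Pi /= mulf_eq0 (gt_eqF (wp i Pi)) /=.
  by move=> /eqP ->; rewrite ?eqxx /= mulr0.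
have apos : 0 < a by rewrite lt_def ap a0.
apply: (le_trans _ (ler_sum _ (fun i Pi => ler_wpM2l (ltW (wp i Pi)) (phi_tangent apos (tp i Pi))))).
under eq_bigr => i _ do rewrite mulrDr mulrCA mulrBr.
rewrite big_split /= -big_distrl /= w1 mul1r -big_distrr /= sumrB -/a.
rewrite -big_distrl /= w1 mul1r subrr mulr0 addr0.
done.
Qed.
End H2.
Section H3.
Variables (R : realType) (TX TY TZ : finType) (p : TX -> TY -> TZ -> R).
Hypothesis p0 : forall x y z, 0 <= p x y z.
Hypothesis p1 : \sum_x \sum_y \sum_z p x y z = 1.

Lemma pY_ge0 y : 0 <= pY p y.
Proof. by apply: sumr_ge0 => x _; apply: sumr_ge0 => z _. Qed.
Lemma pZ_ge0 z : 0 <= pZ p z.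
Proof. by apply: sumr_ge0 => x _; apply: sumr_ge0 => y _. Qed.
Lemma pYZ_ge0 y z : 0 <= pYZ p y z.
Proof. by apply: sumr_ge0 => x _. Qed.

Lemma pA_ge0 y x : 0 <= pA p y x.
Proof.
apply: sumr_ge0 => y' _; apply: sumr_ge0 => z _; rewrite /pABC.
case: ifP => // _; apply: divr_ge0; last exact: pZ_ge0.
apply: mulr_ge0 => //; apply: divr_ge0; [exact: pYZ_ge0 | exact: pY_ge0].
Qed.

Lemma sum_pY : \sum_(y | 0 < pY p y) pY p y = 1.
Proof.
rewrite big_mkcond /=.
transitivity (\sum_y pY p y).
  apply: eq_bigr => y _; case: ifP => // /negbT.
  by rewrite lt_def negb_and negbK pY_ge0 orbF => /eqP.
by rewrite /pY exchange_big /= -p1; apply: eq_bigr => x _.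
Qed.

Lemma pY_pYZ y : pY p y = \sum_z pYZ p y z.
Proof. by rewrite /pY exchange_big. Qed.

Lemma pZ_pYZ z : pZ p z = \sum_y pYZ p y z.
Proof. by rewrite /pZ exchange_big. Qed.

Lemma key y x y' z : pY p y * pABC p y x y' z =
  if pZ p z == 0 then 0 else p x y' z * pYZ p y z / pZ p z.
Proof.
rewrite /pABC /condZY; case: ifP => Zc; first by rewrite mulr0.
have [Y0|Yn0] := eqVneq (pY p y) 0.
  have : pYZ p y z = 0.
    move: Y0 => /eqP; rewrite pY_pYZ psumr_eq0; last by move=> *; exact: pYZ_ge0.
    by move=> /allP /(_ z (mem_index_enum z)) /eqP.
  by move=> ->; rewrite Y0 !mul0r mulr0 mul0r.
field; by rewrite Zc Yn0.
Qed.

Lemma pX_mix x : pX p x = \sum_(y | 0 < pY p y) pY p y * pA p y x.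
Proof.
rewrite big_mkcond /=.
transitivity (\sum_y pY p y * pA p y x); last first.
  apply: eq_bigr => y _; case: ifP => // /negbT.
  by rewrite lt_def negb_and negbK pY_ge0 orbF => /eqP ->; rewrite mul0r.
transitivity (\sum_y \sum_y' \sum_z
  (if pZ p z == 0 then 0 else p x y' z * pYZ p y z / pZ p z)); last first.
  apply: eq_bigr => y _; rewrite /pA big_distrr /=; apply: eq_bigr => y' _.
  rewrite big_distrr /=; apply: eq_bigr => z _; by rewrite key.
rewrite exchange_big /=.
under eq_bigr => y' _ do rewrite exchange_big /=.
rewrite exchange_big /= /pX exchange_big /=; apply: eq_bigr => z _.
have [Z0|Zn0] := eqVneq (pZ p z) 0.
  rewrite [RHS]big1; last by move=> i _; rewrite big1.
  rewrite big1 // => y' _; move: Z0 => /eqP; rewrite /pZ psumr_eq0; last first.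
    by move=> x' _; apply: sumr_ge0.
  move=> /allP /(_ x (mem_index_enum x)) /eqP /eqP; rewrite psumr_eq0 //.
  by move=> /allP /(_ y' (mem_index_enum y')) /eqP.
apply: eq_bigr => y' _.
by rewrite -big_distrl /= -big_distrr /= -pZ_pYZ mulfK.
Qed.

End H3.

Unset Implicit Arguments.
Theorem lemma3 (R : realType) (TX TY TZ : finType) (p : TX -> TY -> TZ -> R) :
  is_pmf3 p ->
  \sum_(y : TY | 0 < pY p y) pY p y * entropy (pA p y) <= entropy (pX p).
Proof.
move=> [p0 p1]; rewrite /entropy.
under eq_bigr => y _ do rewrite mulrN big_distrr /=.
rewrite sumrN exchange_big /= lerN2; apply: ler_sum => x _.
rewrite (pX_mix p0 x).
apply: (@phi_jensen R TY (fun y => 0 < pY p y) (pY p) (pA p ^~ x)) => //.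
- by move=> y _; exact: pA_ge0.
- exact: sum_pY.
Qed.
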